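(* Let $N\ge 3$ and let $m:\mathbb R^{2N}\to\mathbb R$ be measurable and satisfy $$m(X-tV,V)=m(X,V)\quad\text{for all }X\in\mathcal Q^\circ,\ V\in F_X,\ t\in\mathbb R.$$ Then there is a measurable $m_0:\mathbb R\times\mathbb R^N\to\mathbb R$ such that $$m(X,V)=m_0\big(X\cdot(\mathsf E(V)\mathbf 1-\mathsf P(V)V),\,V\big)\quad\text{for all }X\in\mathcal Q^\circ,\ V\in F_X.$$
   Context: Fix an integer $N\ge 3$ and write $\mathbf 1=(1,\dots,1)\in\mathbb R^N$. Let $\mathcal Q^\circ=\{X=(x_1,\dots,x_N)\in\mathbb R^N: x_1<x_2<\dots<x_N\}$ and $\Delta=\{(u_1,u_2)\in\mathbb R^2:u_1=u_2\}$. For $X\in\mathcal Q^\circ$ and $U=(u_1,u_2)\in\mathbb R^2$ define $\psi(X,U)\in\mathbb R^N$ by $\psi_1=u_1$, $\psi_2=u_2$ and $\psi_i=\frac{(x_i-x_2)u_1-(x_i-x_1)u_2}{x_1-x_2}$ for $3\le i\le N$, and let $F_X=\{\psi(X,U):U\in\mathbb R^2\setminus\Delta\}$ (equivalently, the set of $V\in\mathbb R^N\setminus\mathbb R\mathbf 1$ such that $X+sV\in\mathbb R\mathbf 1$ for some $s\in\mathbb R$). Momentum and energy maps: $\mathsf P(V)=\sum_{i=1}^N v_i$, $\mathsf E(V)=|V|^2$. *)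

(* Defs.v *)
(* Vectors in R^N are N.-tuples (coordinates
   indexed by 'I_N, i.e. 0-based: paper's x_1, x_2 are tnth X 0, tnth X 1).
   R^N carries the product sigma-algebra of Borel(R) (library instance on
   n.-tuple), which is Borel(R^N); R^{2N} = R^N * R^N with the product
   sigma-algebra. *)
From mathcomp Require Import all_boot all_order all_algebra.
From mathcomp Require Import all_classical all_reals all_analysis.
Set Implicit Arguments. Unset Strict Implicit. Unset Printing Implicit Defensive.
Import Order.TTheory GRing.Theory Num.Theory.
Local Open Scope ring_scope.

Section Defs.
Context {R : realType} {N : nat}.

Definition Qo (X : N.-tuple R) : Prop :=
  forall i j : 'I_N, (i < j)%N -> tnth X i < tnth X j.

(* first two coordinates x_1, x_2 (0 if N is too small; irrelevant for N >= 3) *)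
Definition c1 (X : N.-tuple R) : R := nth 0 (tval X) 0.
Definition c2 (X : N.-tuple R) : R := nth 0 (tval X) 1.

Definition psi (X : N.-tuple R) (U : R * R) : N.-tuple R :=
  [tuple (if val i == 0%N then U.1
          else if val i == 1%N then U.2
          else ((tnth X i - c2 X) * U.1 - (tnth X i - c1 X) * U.2)
                 / (c1 X - c2 X)) | i < N].

Definition FX (X : N.-tuple R) : set (N.-tuple R) :=
  [set V | exists U : R * R, U.1 != U.2 /\ V = psi X U].

Definition momentum (V : N.-tuple R) : R := \sum_(i < N) tnth V i.
Definition energy (V : N.-tuple R) : R := \sum_(i < N) tnth V i ^+ 2.

Definition dotv (X Y : N.-tuple R) : R := \sum_(i < N) tnth X i * tnth Y i.

Definition tshift (X V : N.-tuple R) (t : R) : N.-tuple R :=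
  [tuple tnth X i - t * tnth V i | i < N].

Definition EPvec (V : N.-tuple R) : N.-tuple R :=
  [tuple energy V - momentum V * tnth V i | i < N].

End Defs.

(* Main.v *)
Require Import Defs.
From mathcomp Require Import all_boot all_order all_algebra.
From mathcomp Require Import all_classical all_reals all_analysis.
From mathcomp Require Import measurable_realfun.
From mathcomp Require Import ring lra zify.
Import Order.TTheory GRing.Theory Num.Theory.
Local Open Scope ring_scope.
Local Open Scope classical_set_scope.

Lemma measurable_invR (R : realType) : measurable_fun [set: R] (@GRing.inv R).
Proof.
have -> : [set: R] = [set 0] `|` [set r | r != 0].
  apply/seteqP; split => x //= _; case: (eqVneq x 0) => [->|h]; [left|right] => //.
have mo : measurable [set r : R | r != 0] by apply: open_measurable; exact: open_neq.
apply/measurable_funU => //; split.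
  have h : {in [set (0:R)], cst 0 =1 @GRing.inv R}.
    by move=> x; rewrite inE /= => ->; rewrite invr0.
  exact: (eq_measurable_fun (cst (0:R)) h (measurable_cst _)).
apply: open_continuous_measurable_fun; first exact: open_neq.
by move=> x; rewrite inE /= => x0; apply: inv_continuous.
Qed.

Section S.
Context {R : realType} {N : nat}.
Implicit Types V X : N.-tuple R.

Definition Dq V : R := N%:R * energy V - momentum V ^+ 2.

Lemma dot_line V X (c s : R) : (forall i, tnth X i = c - s * tnth V i) ->
  dotv X (EPvec V) = c * Dq V.
Proof.
move=> hX; rewrite /dotv /Dq.
rewrite (eq_bigr (fun i => c * energy V + (-(c * momentum V + s * energy V)) * tnth V i
                + (s * momentum V) * tnth V i ^+ 2)); last first.
  by move=> i _; rewrite hX tnth_mktuple; ring.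
rewrite !big_split /= -!mulr_sumr sumr_const card_ord -/(momentum V) -/(energy V).
rewrite -mulr_natr; ring.
Qed.

Lemma Dq_lag V : 2%:R * Dq V = \sum_(i < N) \sum_(j < N) (tnth V i - tnth V j) ^+ 2.
Proof.
rewrite (eq_bigr (fun i => tnth V i ^+ 2 * N%:R + (- 2%:R * tnth V i) * momentum V + energy V)); last first.
  move=> i _.
  rewrite (eq_bigr (fun j => tnth V i ^+ 2 + (- 2%:R * tnth V i) * tnth V j + tnth V j ^+2)); last first.
    by move=> j _; ring.
  have h1 : \sum_(j < N) tnth V i ^+ 2 = tnth V i ^+ 2 * N%:R.
    by rewrite sumr_const card_ord mulr_natr.
  have h2 : \sum_(j < N) (- 2%:R * tnth V i) * tnth V j = (- 2%:R * tnth V i) * momentum V.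
    by rewrite mulr_sumr.
  by rewrite big_split big_split /= h1 h2.
have h1 : \sum_(i < N) tnth V i ^+ 2 * N%:R = energy V * N%:R by rewrite mulr_suml.
have h2 : \sum_(i < N) (- 2%:R * tnth V i) * momentum V = (- 2%:R * momentum V) * momentum V.
  by rewrite -mulr_suml -mulr_sumr.
have h3 : \sum_(i < N) energy V = energy V * N%:R by rewrite sumr_const card_ord mulr_natr.
rewrite big_split big_split /= h1 h2 h3 /Dq; ring.
Qed.

Lemma Dq_gt0 V i j : tnth V i != tnth V j -> 0 < Dq V.
Proof.
move=> hij.
have hin : forall F : 'I_N -> R, (forall k, 0 <= F k) -> forall k, F k <= \sum_(l < N) F l.
  by move=> F F0 k; rewrite (bigD1 k) //= lerDl sumr_ge0.
have h1 : (tnth V i - tnth V j) ^+ 2 <= \sum_(a < N) \sum_(b < N) (tnth V a - tnth V b) ^+ 2.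
  apply: le_trans (hin _ _ i).
    exact: (hin (fun b => (tnth V i - tnth V b) ^+ 2) (fun b => sqr_ge0 _) j).
  by move=> k; apply: sumr_ge0 => b _; exact: sqr_ge0.
have h2 : 0 < (tnth V i - tnth V j) ^+ 2.
  rewrite lt_neqAle sqr_ge0 andbT eq_sym sqrf_eq0 subr_eq0; exact: hij.
rewrite -Dq_lag in h1; lra.
Qed.

Lemma measurable_Dq : measurable_fun [set: N.-tuple R] Dq.
Proof.
have mt2 : forall i : 'I_N, measurable_fun [set: N.-tuple R] (fun V => tnth V i ^+ 2).
  by move=> i; apply: measurable_funX; exact: measurable_tnth.
have me := measurable_sum (index_enum 'I_N) mt2.
have mp := measurable_sum (index_enum 'I_N) (fun i => @measurable_tnth _ R N i).
have mp2 : measurable_fun [set: N.-tuple R] (fun V => momentum V ^+ 2).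
  by apply: measurable_funX; exact: mp.
exact: (measurable_funB (measurable_funM (measurable_cst (N%:R : R)) me) mp2).
Qed.

End S.

Theorem proposition3p6 (R : realType) (N : nat) (hN : (3 <= N)%N)
  (m : (N.-tuple R * N.-tuple R)%type -> R)
  (mm : measurable_fun [set: (N.-tuple R * N.-tuple R)%type] m)
  (hinv : forall (X V : N.-tuple R) (t : R),
      Qo X -> FX X V -> m (tshift X V t, V) = m (X, V)) :
  exists m0 : (R * N.-tuple R)%type -> R,
    measurable_fun [set: (R * N.-tuple R)%type] m0 /\
    (forall X V : N.-tuple R, Qo X -> FX X V ->
       m (X, V) = m0 (dotv X (EPvec V), V)).
Proof.
exists (fun p => m ([tuple p.1 / Dq p.2 | i < N], p.2)); split.
  apply: (measurableT_comp mm).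
  apply: measurable_fun_pair => //.
  apply/measurable_fun_tnthP => i.
  have h : {in [set: (R * N.-tuple R)%type], (fun p => p.1 / Dq p.2) =1
      (fun p : (R * N.-tuple R)%type => tnth [tuple p.1 / Dq p.2 | k < N] i)}.
    by move=> p _; rewrite /= tnth_mktuple.
  apply: (eq_measurable_fun _ h).
  apply: measurable_funM => //.
  apply: (measurableT_comp (@measurable_invR R)).
  exact: (measurableT_comp (@measurable_Dq R N)).
move=> X V hX [U [hU ->]].
have h0 : (0 < N)%N by lia.
have h1 : (1 < N)%N by lia.
pose i0 := Ordinal h0; pose i1 := Ordinal h1.
set x1 := c1 X; set x2 := c2 X.
have e1 : tnth X i0 = x1 by rewrite (tnth_nth 0).
have e2 : tnth X i1 = x2 by rewrite (tnth_nth 0).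
have lt12 : x1 < x2 by rewrite -e1 -e2; apply: hX.
have hx : x1 - x2 != 0 by apply/eqP => h; lra.
have hu : U.1 - U.2 != 0 by rewrite subr_eq0.
set s := (x2 - x1) / (U.1 - U.2).
set c := (x2 * U.1 - x1 * U.2) / (U.1 - U.2).
have key : forall i, tnth X i = c - s * tnth (psi X U) i.
  move=> i; rewrite tnth_mktuple -/x1 -/x2 /s /c.
  case: ifP => [/eqP h|_].
    have -> : i = i0 by apply: val_inj.
    by rewrite e1; field.
  case: ifP => [/eqP h|_].
    have -> : i = i1 by apply: val_inj.
    by rewrite e2; field.
  by field; rewrite hx hu.
have hD : Dq (psi X U) != 0.
  apply/eqP => h; have := @Dq_gt0 R N (psi X U) i0 i1.
  by rewrite !tnth_mktuple /= hU h ltxx => /(_ isT).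
rewrite -(hinv X (psi X U) (-s) hX); last by exists U.
rewrite /= (dot_line _ _ _ _ key) mulfK //.
congr (m (_, _)); apply: eq_from_tnth => i; rewrite /tshift [LHS]tnth_mktuple key [RHS]tnth_mktuple; ring.
Qed.
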